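(* Let $X$ be a topological space in which every point has a fundamental system of compact neighbourhoods, and let $L\subset X$ be a compact subspace which is separated in $X$. Then $L$ admits an open neighbourhood in $X$ which is Hausdorff.
   Context: Compact means quasi-compact and Hausdorff (Bourbaki's convention). A subset $A\subset X$ is separated in $X$ if any two distinct points of $A$ admit disjoint open neighbourhoods in $X$. *)

(* Defs.v *)
From Stdlib Require Import List.

Set Implicit Arguments.

Record topology (X : Type) := Topology {
  is_open : (X -> Prop) -> Prop;
  open_full : is_open (fun _ => True);
  open_inter : forall U V, is_open U -> is_open V -> is_open (fun x => U x /\ V x);
  open_union : forall (I : Type) (F : I -> X -> Prop),
      (forall i, is_open (F i)) -> is_open (fun x => exists i, F i x)
}.

Section Topo.
Variables (X : Type) (T : topology X).

Definition subset (A B : X -> Prop) : Prop := forall x, A x -> B x.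

Definition nbhd (x : X) (N : X -> Prop) : Prop :=
  exists U, is_open T U /\ U x /\ subset U N.

Definition open_nbhd_of_set (L U : X -> Prop) : Prop :=
  is_open T U /\ subset L U.

(* The subspace A (with the induced topology) is quasi-compact: every cover of A
   by open sets of the subspace (i.e. traces on A of open sets of X) admits a
   finite subcover. *)
Definition quasi_compact (A : X -> Prop) : Prop :=
  forall (I : Type) (F : I -> X -> Prop),
    (forall i, is_open T (F i)) ->
    (forall x, A x -> exists i, F i x) ->
    exists s : list I, forall x, A x -> exists i, In i s /\ F i x.

(* The subspace A (with the induced topology) is Hausdorff: two distinct points
   of A have disjoint open neighbourhoods in A (traces of open sets of X). *)
Definition hausdorff_subspace (A : X -> Prop) : Prop :=
  forall x y, A x -> A y -> x <> y ->
    exists U V, is_open T U /\ is_open T V /\ U x /\ V y /\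
      (forall z, A z -> U z -> V z -> False).

(* Bourbaki: compact = quasi-compact and Hausdorff *)
Definition compact_subspace (A : X -> Prop) : Prop :=
  quasi_compact A /\ hausdorff_subspace A.

Definition separated_in (A : X -> Prop) : Prop :=
  forall x y, A x -> A y -> x <> y ->
    exists U V, is_open T U /\ is_open T V /\ U x /\ V y /\
      (forall z, U z -> V z -> False).

Definition locally_compact_nbhds : Prop :=
  forall x N, nbhd x N ->
    exists K, nbhd x K /\ compact_subspace K /\ subset K N.

End Topo.

(* Main.v *)
Require Import Defs.
From Stdlib Require Import List Classical.

Section S.
Variables (X : Type) (T : topology X).

Definition Sep (y z : X) : Prop := y <> z ->
  exists U V, is_open T U /\ is_open T V /\ U y /\ V z /\ (forall w, U w -> V w -> False).

Fixpoint inter {I : Type} (G : I -> X -> Prop) (s : list I) : X -> Prop :=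
  match s with
  | nil => fun _ => True
  | i :: s' => fun y => G i y /\ inter G s' y
  end.

Lemma inter_open {I : Type} (G : I -> X -> Prop) s :
  (forall i, is_open T (G i)) -> is_open T (inter G s).
Proof.
  intro HG; induction s as [|i s IH]; simpl.
  - apply open_full.
  - apply open_inter; auto.
Qed.

Lemma inter_in {I : Type} (G : I -> X -> Prop) s y :
  inter G s y -> forall i, In i s -> G i y.
Proof.
  induction s as [|j s IH]; simpl; [tauto|].
  intros [H1 H2] i [<-|Hi]; auto.
Qed.

Lemma inter_all {I : Type} (G : I -> X -> Prop) s y :
  (forall i, G i y) -> inter G s y.
Proof. induction s; simpl; auto. Qed.

Lemma union_open {I : Type} (G : I -> X -> Prop) (s : list I) :
  (forall i, is_open T (G i)) ->
  is_open T (fun z => exists j : {i | In i s}, G (proj1_sig j) z).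
Proof. intro H. apply (open_union T (fun j : {i | In i s} => G (proj1_sig j))). auto. Qed.

Lemma local_step (L : X -> Prop) :
  locally_compact_nbhds T -> separated_in T L ->
  forall x x', L x -> L x' -> exists A B, is_open T A /\ is_open T B /\ A x /\ B x' /\
    forall y z, A y -> B z -> Sep y z.
Proof.
  intros Hlc Hsep x x' Hx Hx'.
  destruct (classic (x = x')) as [<-|Hne].
  - assert (Hn : nbhd T x (fun _ => True)).
    { exists (fun _ => True); repeat split; try apply open_full; intros ? ?; auto. }
    destruct (Hlc x _ Hn) as [K [[V [HV [Vx VK]]] [[_ HK] _]]].
    exists V, V; repeat split; auto.
    intros y z Vy Vz Hyz.
    destruct (HK y z (VK y Vy) (VK z Vz) Hyz) as [U1 [V1 [HU1 [HV1 [U1y [V1z Hd]]]]]].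
    exists (fun w => U1 w /\ V w), (fun w => V1 w /\ V w).
    repeat split; auto using open_inter.
    intros w [a b] [c d]. exact (Hd w (VK w b) a c).
  - destruct (Hsep x x' Hx Hx' Hne) as [P [Q [HP [HQ [Px [Qx Hd]]]]]].
    exists P, Q; repeat split; auto.
    intros y z Py Qz _. exists P, Q; repeat split; auto.
Qed.

Lemma step2 (L : X -> Prop) :
  locally_compact_nbhds T -> quasi_compact T L -> separated_in T L ->
  forall x, L x -> exists A W, is_open T A /\ is_open T W /\ A x /\ subset L W /\
    forall y z, A y -> W z -> Sep y z.
Proof.
  intros Hlc Hqc Hsep x Hx.
  set (I := {AB : (X -> Prop) * (X -> Prop) | is_open T (fst AB) /\ is_open T (snd AB)
          /\ fst AB x /\ forall y z, fst AB y -> snd AB z -> Sep y z}).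
  destruct (Hqc I (fun i => snd (proj1_sig i))) as [s Hs].
  - intros [AB H]; simpl; tauto.
  - intros x' Hx'.
    destruct (@local_step L Hlc Hsep x x' Hx Hx') as [A [B [HA [HB [Ax [Bx' H]]]]]].
    exists (exist _ (A, B) (conj HA (conj HB (conj Ax H)))); simpl; auto.
  - exists (inter (fun i : I => fst (proj1_sig i)) s),
      (fun z => exists j : {i | In i s}, snd (proj1_sig (proj1_sig j)) z).
    repeat split.
    + apply inter_open. intros [AB H]; simpl; tauto.
    + apply (union_open (fun i : I => snd (proj1_sig i))). intros [AB H]; simpl; tauto.
    + apply inter_all. intros [AB H]; simpl; tauto.
    + intros z Hz. destruct (Hs z Hz) as [i [Hi Fi]]. exists (exist _ i Hi); auto.
    + intros y z Hy [[i Hi] Hz]; simpl in Hz.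
      pose proof (inter_in _ _ _ Hy i Hi) as Hyi. simpl in Hyi.
      exact (proj2 (proj2 (proj2 (proj2_sig i))) y z Hyi Hz).
Qed.

End S.

Theorem proposition6p12 (X : Type) (T : topology X) (L : X -> Prop) :
  locally_compact_nbhds T ->
  compact_subspace T L ->
  separated_in T L ->
  exists U, open_nbhd_of_set T L U /\ hausdorff_subspace T U.
Proof.
  intros Hlc [Hqc _] Hsep.
  set (I := {AW : (X -> Prop) * (X -> Prop) | is_open T (fst AW) /\ is_open T (snd AW)
          /\ subset L (snd AW) /\ forall y z, fst AW y -> snd AW z -> @Sep X T y z}).
  destruct (Hqc I (fun i => fst (proj1_sig i))) as [s Hs].
  - intros [AB H]; simpl; tauto.
  - intros x Hx.
    destruct (@step2 X T L Hlc Hqc Hsep x Hx) as [A [W [HA [HW [Ax [LW H]]]]]].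
    exists (exist _ (A, W) (conj HA (conj HW (conj LW H)))); simpl; auto.
  - exists (fun y => (exists j : {i | In i s}, fst (proj1_sig (proj1_sig j)) y)
               /\ @inter X I (fun i : I => snd (proj1_sig i)) s y).
    split; [split|].
    + apply open_inter.
      * apply (@union_open X T _ (fun i : I => fst (proj1_sig i))). intros [AB H]; simpl; tauto.
      * apply (@inter_open X T). intros [AB H]; simpl; tauto.
    + intros z Hz. split.
      * destruct (Hs z Hz) as [i [Hi Fi]]. exists (exist _ i Hi); auto.
      * apply inter_all. intros [AB H]; simpl. destruct H as [_ [_ [H _]]]. auto.
    + intros y z [[[i Hi] Hy] _] [_ Hz] Hyz; simpl in Hy.
      pose proof (@inter_in X I _ _ _ Hz i Hi) as Hzi. simpl in Hzi.
      destruct (proj2 (proj2 (proj2 (proj2_sig i))) y z Hy Hzi Hyz) as [U [V [HU [HV [Uy [Vz Hd]]]]]].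
      exists U, V; repeat split; auto.
      intros w _; apply Hd.
Qed.
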